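(* Let $\gamma_a,\gamma_s>0$, $\sigma_B>0$, $q>0$, $\lambda>0$ and $\varepsilon_a\in(0,1]$. For $T_s\ge0$ let $T_a^{(1)}(T_s)$ be the unique $T_a\ge0$ such that $\lambda T_a+2\varepsilon_a\sigma_B T_a^4=\lambda T_s+\varepsilon_a\sigma_B T_s^4$, and define \[ \Phi(T_s)=\frac{\lambda}{2}\big(T_s-T_a^{(1)}(T_s)\big)+\sigma_B\Big(1-\frac{\varepsilon_a}{2}\Big)T_s^4,\qquad T_s\ge0. \] Then $\Phi$ is strictly increasing and strictly convex on $[0,+\infty)$. Consequently, if $\beta_s$ is the piecewise linear coalbedo described in the context, the system \[ \gamma_a T_a'=-\lambda(T_a-T_s)+\varepsilon_a\sigma_B|T_s|^3T_s-2\varepsilon_a\sigma_B|T_a|^3T_a,\qquad \gamma_s T_s'=-\lambda(T_s-T_a)-\sigma_B|T_s|^3T_s+\varepsilon_a\sigma_B|T_a|^3T_a+q\beta_s(T_s) \] has at most three equilibrium points.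
   Context: The coalbedo is $\beta_s(T)=\beta_{s,-}$ for $T\le T_{s,-}$, $\beta_s(T)=\beta_{s,-}+(\beta_{s,+}-\beta_{s,-})\frac{T-T_{s,-}}{T_{s,+}-T_{s,-}}$ for $T\in[T_{s,-},T_{s,+}]$, and $\beta_s(T)=\beta_{s,+}$ for $T\ge T_{s,+}$, where $T_{s,+}>T_{s,-}>0$ and $\beta_{s,+}>\beta_{s,-}>0$. An equilibrium point is a point $(T_a,T_s)\in[0,\infty)^2$ at which both right-hand sides vanish. *)

(* Defs.v *)
From Stdlib Require Import Reals Lra List ClassicalEpsilon.
Open Scope R_scope.

Definition coalbedo (Tm Tp bm bp T : R) : R :=
  if Rle_dec T Tm then bm
  else if Rle_dec Tp T then bp
  else bm + (bp - bm) * ((T - Tm) / (Tp - Tm)).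

Definition Ta1 (lam epsa sigB Ts : R) : R :=
  epsilon (inhabits 0)
    (fun Ta => 0 <= Ta /\
       lam * Ta + 2 * epsa * sigB * Ta ^ 4 = lam * Ts + epsa * sigB * Ts ^ 4).

Definition Phi (lam epsa sigB Ts : R) : R :=
  lam / 2 * (Ts - Ta1 lam epsa sigB Ts) + sigB * (1 - epsa / 2) * Ts ^ 4.

(* Right-hand sides of the system (without the factors gamma_a, gamma_s). *)
Definition rhs_a (lam epsa sigB Ta Ts : R) : R :=
  - lam * (Ta - Ts) + epsa * sigB * (Rabs Ts ^ 3 * Ts)
  - 2 * epsa * sigB * (Rabs Ta ^ 3 * Ta).

Definition rhs_s (lam epsa sigB q Tm Tp bm bp Ta Ts : R) : R :=
  - lam * (Ts - Ta) - sigB * (Rabs Ts ^ 3 * Ts)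
  + epsa * sigB * (Rabs Ta ^ 3 * Ta) + q * coalbedo Tm Tp bm bp Ts.

Definition equilibrium (lam epsa sigB q Tm Tp bm bp : R) (p : R * R) : Prop :=
  0 <= fst p /\ 0 <= snd p /\
  rhs_a lam epsa sigB (fst p) (snd p) = 0 /\
  rhs_s lam epsa sigB q Tm Tp bm bp (fst p) (snd p) = 0.

(* Main.v *)
Require Import Defs.
From Stdlib Require Import Reals List.
From Stdlib Require Import Lra Lia Psatz ClassicalEpsilon.
Open Scope R_scope.

Lemma pow4_lt x y : 0 <= x -> x < y -> x ^ 4 < y ^ 4.
Proof.
  intros Hx Hxy.
  assert (H1: x^2 < y^2) by (simpl; nra).
  assert (0 <= x^2) by (simpl; nra).
  replace (x^4) with ((x^2)^2) by ring. replace (y^4) with ((y^2)^2) by ring.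
  simpl; nra.
Qed.

Lemma pow4_le x y : 0 <= x -> x <= y -> x ^ 4 <= y ^ 4.
Proof. intros; apply pow_incr; lra. Qed.

Lemma pow4_ge0 x : 0 <= x ^ 4.
Proof. replace (x^4) with ((x^2)^2) by ring. apply pow2_ge_0. Qed.

Lemma conv2 u v t : 0 <= t <= 1 ->
  (t*u + (1-t)*v)^2 <= t*u^2 + (1-t)*v^2.
Proof.
  intros Ht.
  assert (E: t*u^2 + (1-t)*v^2 - (t*u + (1-t)*v)^2 = t*(1-t)*(u-v)^2) by ring.
  assert (0 <= t*(1-t)) by nra.
  assert (0 <= (u-v)^2) by apply pow2_ge_0. nra.
Qed.

Lemma conv2s u v t : u <> v -> 0 < t < 1 ->
  (t*u + (1-t)*v)^2 < t*u^2 + (1-t)*v^2.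
Proof.
  intros Huv Ht.
  assert (E: t*u^2 + (1-t)*v^2 - (t*u + (1-t)*v)^2 = t*(1-t)*(u-v)^2) by ring.
  assert (0 < t*(1-t)) by nra.
  assert (0 < (u-v)^2) by (assert (u - v <> 0) by lra; simpl; rewrite Rmult_1_r; apply Rsqr_pos_lt; auto).
  nra.
Qed.

Lemma conv4 u v t : 0 <= t <= 1 ->
  (t*u + (1-t)*v)^4 <= t*u^4 + (1-t)*v^4.
Proof.
  intros Ht.
  pose proof (conv2 u v t Ht) as H1.
  pose proof (conv2 (u^2) (v^2) t Ht) as H2.
  assert (0 <= (t*u + (1-t)*v)^2) by apply pow2_ge_0.
  replace ((t*u + (1-t)*v)^4) with (((t*u + (1-t)*v)^2)^2) by ring.
  replace (u^4) with ((u^2)^2) by ring. replace (v^4) with ((v^2)^2) by ring.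
  assert (((t*u + (1-t)*v)^2)^2 <= (t*u^2 + (1-t)*v^2)^2) by (apply pow_incr; lra).
  lra.
Qed.

Lemma conv4s u v t : u <> v -> 0 < t < 1 ->
  (t*u + (1-t)*v)^4 < t*u^4 + (1-t)*v^4.
Proof.
  intros Huv Ht.
  pose proof (conv2s u v t Huv Ht) as H1.
  pose proof (conv2 (u^2) (v^2) t ltac:(lra)) as H2.
  assert (0 <= (t*u + (1-t)*v)^2) by apply pow2_ge_0.
  replace ((t*u + (1-t)*v)^4) with (((t*u + (1-t)*v)^2)^2) by ring.
  replace (u^4) with ((u^2)^2) by ring. replace (v^4) with ((v^2)^2) by ring.
  assert (((t*u + (1-t)*v)^2)^2 < (t*u^2 + (1-t)*v^2)^2) by (simpl; nra).
  lra.
Qed.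

Definition gf lam e s T := lam*T + 2*e*s*T^4.
Definition hf lam e s T := lam*T + e*s*T^4.

Lemma gf_lt lam e s x y : 0 < lam -> 0 < e -> 0 < s -> 0 <= x -> x < y ->
  gf lam e s x < gf lam e s y.
Proof.
  intros. unfold gf. pose proof (pow4_lt x y H2 H3).
  assert (0 < 2*e*s) by nra. nra.
Qed.

Lemma hf_lt lam e s x y : 0 < lam -> 0 < e -> 0 < s -> 0 <= x -> x < y ->
  hf lam e s x < hf lam e s y.
Proof.
  intros. unfold hf. pose proof (pow4_lt x y H2 H3).
  assert (0 < e*s) by nra. nra.
Qed.

Lemma gf_inj lam e s x y : 0 < lam -> 0 < e -> 0 < s -> 0 <= x -> 0 <= y ->
  gf lam e s x = gf lam e s y -> x = y.
Proof.
  intros. destruct (Rtotal_order x y) as [H5|[H5|H5]]; auto.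
  - pose proof (gf_lt lam e s x y H H0 H1 H2 H5); lra.
  - pose proof (gf_lt lam e s y x H H0 H1 H3 H5); lra.
Qed.

Lemma Ta1_spec lam e s T : 0 < lam -> 0 < e -> 0 < s -> 0 <= T ->
  0 <= Ta1 lam e s T /\ gf lam e s (Ta1 lam e s T) = hf lam e s T.
Proof.
  intros Hl He Hs HT. unfold Ta1, gf, hf. apply epsilon_spec.
  set (H := lam * T + e * s * T ^ 4).
  assert (HH: 0 <= H).
  { unfold H. pose proof (pow4_ge0 T). assert (0 < e*s) by nra. nra. }
  destruct (Req_dec H 0) as [H0|H0].
  - exists 0. split; [lra|]. simpl. fold H. lra.
  - destruct (IVT (fun x => lam*x + 2*e*s*x^4 - H) 0 (H/lam)) as [z [Hz1 Hz2]].
    + reg.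
    + apply Rdiv_lt_0_compat; lra.
    + simpl; lra.
    + assert (lam * (H/lam) = H) by (field; lra).
      assert (0 < (H/lam)^4) by (apply pow_lt; apply Rdiv_lt_0_compat; lra).
      assert (0 < 2*e*s) by nra. nra.
    + exists z. split; [lra|]. fold H. lra.
Qed.

Lemma Phi_eq lam e s T : 0 < lam -> 0 < e -> 0 < s -> 0 <= T ->
  Phi lam e s T = s*(1-e)*T^4 + e*s*(Ta1 lam e s T)^4.
Proof.
  intros Hl He Hs HT. destruct (Ta1_spec lam e s T Hl He Hs HT) as [_ H].
  unfold gf, hf in H. unfold Phi.
  set (a := Ta1 lam e s T) in *.
  assert (E: s*(1-e)*T^4 + e*s*a^4 - (lam / 2 * (T - a) + s * (1 - e / 2) * T ^ 4)
     = (1/2)*((lam*a + 2*e*s*a^4) - (lam*T + e*s*T^4))) by (field).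
  rewrite H in E. lra.
Qed.

Lemma Ta1_lt lam e s x y : 0 < lam -> 0 < e -> 0 < s -> 0 <= x -> x < y ->
  Ta1 lam e s x < Ta1 lam e s y.
Proof.
  intros Hl He Hs Hx Hxy.
  destruct (Ta1_spec lam e s x Hl He Hs Hx) as [Hax Hx'].
  destruct (Ta1_spec lam e s y Hl He Hs ltac:(lra)) as [Hay Hy'].
  pose proof (hf_lt lam e s x y Hl He Hs Hx Hxy).
  destruct (Rlt_le_dec (Ta1 lam e s x) (Ta1 lam e s y)) as [h|h]; auto.
  destruct (Req_dec (Ta1 lam e s x) (Ta1 lam e s y)) as [h'|h'].
  - rewrite h' in Hx'. lra.
  - pose proof (gf_lt lam e s (Ta1 lam e s y) (Ta1 lam e s x) Hl He Hs Hay ltac:(lra)). lra.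
Qed.

Lemma Phi_mono lam e s x y : 0 < lam -> 0 < e -> e <= 1 -> 0 < s -> 0 <= x -> x < y ->
  Phi lam e s x < Phi lam e s y.
Proof.
  intros Hl He He1 Hs Hx Hxy.
  rewrite !Phi_eq; try lra.
  pose proof (Ta1_lt lam e s x y Hl He Hs Hx Hxy).
  destruct (Ta1_spec lam e s x Hl He Hs Hx) as [Hax _].
  pose proof (pow4_lt _ _ Hax H).
  pose proof (pow4_le x y Hx ltac:(lra)).
  assert (0 <= s*(1-e)) by nra. assert (0 < e*s) by nra. nra.
Qed.

Lemma a4_conv lam e s x y t : 0 < lam -> 0 < e -> 0 < s -> 0 <= x -> 0 <= y ->
  x <> y -> 0 < t < 1 ->
  (Ta1 lam e s (t*x+(1-t)*y))^4 < t*(Ta1 lam e s x)^4 + (1-t)*(Ta1 lam e s y)^4.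
Proof.
  intros Hl He Hs Hx Hy Hxy Ht.
  assert (Hz: 0 <= t*x+(1-t)*y) by nra.
  destruct (Ta1_spec lam e s x Hl He Hs Hx) as [Hax Hx'].
  destruct (Ta1_spec lam e s y Hl He Hs Hy) as [Hay Hy'].
  destruct (Ta1_spec lam e s _ Hl He Hs Hz) as [Haz Hz'].
  set (ax := Ta1 lam e s x) in *. set (ay := Ta1 lam e s y) in *.
  set (az := Ta1 lam e s (t*x+(1-t)*y)) in *.
  set (c := t*ax + (1-t)*ay).
  set (B := t*ax^4 + (1-t)*ay^4).
  destruct (Rlt_le_dec (az^4) B) as [h|h]; auto. exfalso.
  assert (Hc4: c^4 <= B) by (apply conv4; lra).
  assert (Hc: c <= az).
  { destruct (Rle_lt_dec c az) as [h'|h']; auto.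
    pose proof (pow4_lt az c Haz h'). lra. }
  assert (Hh: hf lam e s (t*x+(1-t)*y) < t*hf lam e s x + (1-t)*hf lam e s y).
  { unfold hf. pose proof (conv4s x y t Hxy Ht). assert (0 < e*s) by nra. nra. }
  assert (Hg: gf lam e s az >= lam*c + 2*e*s*B).
  { unfold gf. assert (0 < 2*e*s) by nra. nra. }
  assert (lam*c + 2*e*s*B = t*gf lam e s ax + (1-t)*gf lam e s ay)
    by (unfold c, B, gf; ring).
  rewrite Hx', Hy' in H. lra.
Qed.

Lemma Phi_conv lam e s x y t : 0 < lam -> 0 < e -> e <= 1 -> 0 < s -> 0 <= x -> 0 <= y ->
  x <> y -> 0 < t < 1 ->
  Phi lam e s (t*x+(1-t)*y) < t*Phi lam e s x + (1-t)*Phi lam e s y.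
Proof.
  intros Hl He He1 Hs Hx Hy Hxy Ht.
  assert (Hz: 0 <= t*x+(1-t)*y) by nra.
  rewrite !Phi_eq; try lra.
  pose proof (a4_conv lam e s x y t Hl He Hs Hx Hy Hxy Ht).
  pose proof (conv4 x y t ltac:(lra)).
  assert (0 <= s*(1-e)) by nra. assert (0 < e*s) by nra. nra.
Qed.

Lemma cb_lo Tm Tp bm bp T : T <= Tm -> coalbedo Tm Tp bm bp T = bm.
Proof. intros; unfold coalbedo; destruct (Rle_dec T Tm); [auto|lra]. Qed.

Lemma cb_hi Tm Tp bm bp T : Tm < Tp -> Tp <= T -> coalbedo Tm Tp bm bp T = bp.
Proof. intros; unfold coalbedo; destruct (Rle_dec T Tm); [lra|].
  destruct (Rle_dec Tp T); [auto|lra]. Qed.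

Lemma cb_mid Tm Tp bm bp T : Tm < Tp -> Tm <= T <= Tp ->
  coalbedo Tm Tp bm bp T = bm + (bp - bm) * ((T - Tm) / (Tp - Tm)).
Proof. intros; unfold coalbedo; destruct (Rle_dec T Tm).
  - replace T with Tm by lra. unfold Rdiv. ring.
  - destruct (Rle_dec Tp T); [|auto]. replace T with Tp by lra. field. lra. Qed.

Definition F lam e s q Tm Tp bm bp T := Phi lam e s T - q * coalbedo Tm Tp bm bp T.

Lemma F_conv lam e s q Tm Tp bm bp u v w : 0 < lam -> 0 < e -> e <= 1 -> 0 < s ->
  0 < Tm -> Tm < Tp -> Tm <= u -> u < v -> v < w -> w <= Tp ->
  (w-u) * F lam e s q Tm Tp bm bp v <
  (w-v) * F lam e s q Tm Tp bm bp u + (v-u) * F lam e s q Tm Tp bm bp w.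
Proof.
  intros. set (t := (w-v)/(w-u)).
  assert (Ht: 0 < t < 1).
  { unfold t; split. apply Rdiv_lt_0_compat; lra.
    apply (Rmult_lt_reg_r (w-u)); [lra|]. unfold Rdiv. rewrite Rmult_assoc, Rinv_l; lra. }
  assert (Hv: v = t*u + (1-t)*w) by (unfold t; field; lra).
  pose proof (Phi_conv lam e s u w t H H0 H1 H2 ltac:(lra) ltac:(lra) ltac:(lra) Ht) as HC.
  rewrite <- Hv in HC.
  assert (Hw: w - v = t*(w-u)) by (unfold t; field; lra).
  assert (Hu: v - u = (1-t)*(w-u)) by (unfold t; field; lra).
  unfold F. rewrite !cb_mid by lra. rewrite Hw, Hu.
  assert (HB: (w-u) * (bm + (bp - bm) * ((v - Tm) / (Tp - Tm))) =
     t*(w-u)*(bm + (bp - bm) * ((u - Tm) / (Tp - Tm))) + (1-t)*(w-u)*(bm + (bp - bm) * ((w - Tm) / (Tp - Tm)))).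
  { rewrite Hv. field. lra. }
  assert (0 < w - u) by lra.
  assert (HP: (w-u) * Phi lam e s v < (w-u) * (t * Phi lam e s u + (1 - t) * Phi lam e s w))
    by (apply Rmult_lt_compat_l; lra).
  nra.
Qed.

Lemma L4 lam e s q Tm Tp bm bp r1 r2 r3 r4 : 0 < lam -> 0 < e -> e <= 1 -> 0 < s ->
  0 < Tm -> Tm < Tp -> 0 <= r1 -> r1 < r2 -> r2 < r3 -> r3 < r4 ->
  F lam e s q Tm Tp bm bp r1 = 0 -> F lam e s q Tm Tp bm bp r2 = 0 ->
  F lam e s q Tm Tp bm bp r3 = 0 -> F lam e s q Tm Tp bm bp r4 = 0 -> False.
Proof.
  intros Hl He He1 Hs HTm HT H0 H12 H23 H34 F1 F2 F3 F4.
  assert (A: Tm < r2).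
  { destruct (Rlt_le_dec Tm r2) as [h|h]; auto. exfalso.
    pose proof (Phi_mono lam e s r1 r2 Hl He He1 Hs H0 H12).
    unfold F in F1, F2. rewrite !cb_lo in F1, F2 by lra. lra. }
  assert (C: r3 < Tp).
  { destruct (Rlt_le_dec r3 Tp) as [h|h]; auto. exfalso.
    pose proof (Phi_mono lam e s r3 r4 Hl He He1 Hs ltac:(lra) H34).
    unfold F in F3, F4. rewrite !cb_hi in F3, F4 by lra. lra. }
  destruct (Rle_lt_dec r4 Tp) as [h|h].
  - pose proof (F_conv lam e s q Tm Tp bm bp r2 r3 r4 Hl He He1 Hs HTm HT ltac:(lra) H23 H34 h).
    rewrite F2, F3, F4 in H. lra.
  - pose proof (F_conv lam e s q Tm Tp bm bp r2 r3 Tp Hl He He1 Hs HTm HT ltac:(lra) H23 C ltac:(lra)).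
    rewrite F2, F3 in H.
    assert (0 < F lam e s q Tm Tp bm bp Tp) by nra.
    pose proof (Phi_mono lam e s Tp r4 Hl He He1 Hs ltac:(lra) h).
    unfold F in F4, H1. rewrite !cb_hi in F4, H1 by lra. lra.
Qed.

Lemma equil_root lam e s q Tm Tp bm bp p : 0 < lam -> 0 < e -> 0 < s ->
  equilibrium lam e s q Tm Tp bm bp p ->
  0 <= snd p /\ fst p = Ta1 lam e s (snd p) /\ F lam e s q Tm Tp bm bp (snd p) = 0.
Proof.
  intros Hl He Hs [H1 [H2 [H3 H4]]]. destruct p as [a T]; simpl in *.
  unfold rhs_a in H3. unfold rhs_s in H4.
  rewrite !Rabs_pos_eq in H3, H4 by lra.
  destruct (Ta1_spec lam e s T Hl He Hs H2) as [Ha Hg].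
  assert (Ea: a = Ta1 lam e s T).
  { apply (gf_inj lam e s); auto. rewrite Hg. unfold gf, hf.
    replace (a^3*a) with (a^4) in H3 by ring. replace (T^3*T) with (T^4) in H3 by ring.
    lra. }
  split; auto. split; auto.
  unfold F. rewrite Phi_eq by lra. rewrite <- Ea.
  replace (a^3*a) with (a^4) in H3, H4 by ring. replace (T^3*T) with (T^4) in H3, H4 by ring.
  lra.
Qed.

Lemma sort4 (P : R -> Prop)
  (HL : forall a b c d, 0<=a -> a<b -> b<c -> c<d -> P a -> P b -> P c -> P d -> False)
  x y z w : 0<=x -> 0<=y -> 0<=z -> 0<=w -> x<>y -> x<>z -> x<>w -> y<>z -> y<>w -> z<>w ->
  P x -> P y -> P z -> P w -> False.
Proof.
  intros.
  destruct (Rlt_le_dec x y); destruct (Rlt_le_dec x z); destruct (Rlt_le_dec x w);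
  destruct (Rlt_le_dec y z); destruct (Rlt_le_dec y w); destruct (Rlt_le_dec z w);
  first [ (apply (HL x y z w); auto; lra) | (apply (HL x y w z); auto; lra) | (apply (HL x z y w); auto; lra) | (apply (HL x z w y); auto; lra) | (apply (HL x w y z); auto; lra) | (apply (HL x w z y); auto; lra) | (apply (HL y x z w); auto; lra) | (apply (HL y x w z); auto; lra) | (apply (HL y z x w); auto; lra) | (apply (HL y z w x); auto; lra) | (apply (HL y w x z); auto; lra) | (apply (HL y w z x); auto; lra) | (apply (HL z x y w); auto; lra) | (apply (HL z x w y); auto; lra) | (apply (HL z y x w); auto; lra) | (apply (HL z y w x); auto; lra) | (apply (HL z w x y); auto; lra) | (apply (HL z w y x); auto; lra) | (apply (HL w x y z); auto; lra) | (apply (HL w x z y); auto; lra) | (apply (HL w y x z); auto; lra) | (apply (HL w y z x); auto; lra) | (apply (HL w z x y); auto; lra) | (apply (HL w z y x); auto; lra) | lra ].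
Qed.

Theorem lemma6p3 (gama gams sigB q lam epsa Tm Tp bm bp : R)
  (hga : 0 < gama) (hgs : 0 < gams) (hsig : 0 < sigB) (hq : 0 < q)
  (hlam : 0 < lam) (heps0 : 0 < epsa) (heps1 : epsa <= 1)
  (hTm : 0 < Tm) (hT : Tm < Tp) (hbm : 0 < bm) (hb : bm < bp) :
  (forall x y, 0 <= x -> x < y -> Phi lam epsa sigB x < Phi lam epsa sigB y) /\
  (forall x y t, 0 <= x -> 0 <= y -> x <> y -> 0 < t < 1 ->
     Phi lam epsa sigB (t * x + (1 - t) * y)
       < t * Phi lam epsa sigB x + (1 - t) * Phi lam epsa sigB y) /\
  (forall l : list (R * R), NoDup l ->
     Forall (equilibrium lam epsa sigB q Tm Tp bm bp) l ->
     (length l <= 3)%nat).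
Proof.
  split; [|split].
  - intros; apply Phi_mono; auto.
  - intros; apply Phi_conv; auto.
  - intros l Hnd Hf.
    destruct l as [|p1 [|p2 [|p3 [|p4 rest]]]]; simpl; try lia.
    exfalso.
    inversion Hf as [|? ? E1 Hf1]; subst.
    inversion Hf1 as [|? ? E2 Hf2]; subst.
    inversion Hf2 as [|? ? E3 Hf3]; subst.
    inversion Hf3 as [|? ? E4 Hf4]; subst.
    inversion Hnd as [|? ? N1 Hnd1]; subst.
    inversion Hnd1 as [|? ? N2 Hnd2]; subst.
    inversion Hnd2 as [|? ? N3 Hnd3]; subst.
    destruct (equil_root _ _ _ _ _ _ _ _ _ hlam heps0 hsig E1) as [G1 [A1 R1]].
    destruct (equil_root _ _ _ _ _ _ _ _ _ hlam heps0 hsig E2) as [G2 [A2 R2]].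
    destruct (equil_root _ _ _ _ _ _ _ _ _ hlam heps0 hsig E3) as [G3 [A3 R3]].
    destruct (equil_root _ _ _ _ _ _ _ _ _ hlam heps0 hsig E4) as [G4 [A4 R4]].
    destruct p1 as [a1 t1], p2 as [a2 t2], p3 as [a3 t3], p4 as [a4 t4]; simpl in *.
    apply (sort4 (fun T => F lam epsa sigB q Tm Tp bm bp T = 0)
      (fun a b c d h0 h1 h2 h3 => L4 lam epsa sigB q Tm Tp bm bp a b c d hlam heps0 heps1 hsig hTm hT h0 h1 h2 h3)
      t1 t2 t3 t4); auto;
    intro Heq; subst; intuition congruence.
Qed.
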